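(* Let $k\ge 3$ and let $S_k$ be the $k\times(2^k-1)$ binary matrix whose columns are all the nonzero vectors of $\mathbb{F}_2^k$. Let $C$ be a binary linear $[n,k,d]$ code with generator matrix $G$, let $m\ge 0$ be an integer, and let $C'$ be the binary code generated by the $k\times(m(2^k-1)+n)$ matrix $$G'=[\underbrace{S_k\,|\,S_k\,|\,\cdots\,|\,S_k}_{m}\,|\,G].$$ Then $C$ is a self-orthogonal $[n,k,d]$ code which is optimal with respect to the Griesmer bound if and only if $C'$ is a self-orthogonal $[N,k,D]$ code with $N=m(2^k-1)+n$ and $D=2^{k-1}m+d$ which is optimal with respect to the Griesmer bound. In particular, $C$ is a self-orthogonal Griesmer code if and only if $C'$ is a self-orthogonal Griesmer code.
   Context: All codes are binary linear codes. A code $C$ is self-orthogonal if $C\subseteq C^\perp$ with respect to the standard inner product $\sum x_iy_i$ over $\mathbb{F}_2$. For positive integers $k,d$ let $g(k,d)=\sum_{i=0}^{k-1}\lceil d/2^i\rceil$ (the Griesmer bound says every binary $[n,k,d]$ code has $n\ge g(k,d)$). A binary $[n,k,d]$ code is a Griesmer code if $n=g(k,d)$, and it is optimal with respect to the Griesmer bound if $g(k,d)\le n<g(k,d+1)$. *)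

(* Defs.v *)
(* Binary linear codes as row spaces of matrices over 'F_2. *)
From HB Require Import structures.
From mathcomp Require Import all_boot all_order all_algebra.
Set Implicit Arguments. Unset Strict Implicit. Unset Printing Implicit Defensive.
Import GRing.Theory.
Local Open Scope ring_scope.

Definition wt (n : nat) (c : 'rV['F_2]_n) : nat := #|[set j | c 0 j != 0]|.

Definition in_code (k n : nat) (G : 'M['F_2]_(k, n)) (c : 'rV['F_2]_n) : bool :=
  (c <= G)%MS.

Definition min_dist (k n : nat) (G : 'M['F_2]_(k, n)) (d : nat) : Prop :=
  (exists c, [/\ in_code G c, c != 0 & wt c = d]) /\
  (forall c, in_code G c -> c != 0 -> (d <= wt c)%N).

Definition is_code (k n : nat) (G : 'M['F_2]_(k, n)) (d : nat) : Prop :=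
  \rank G = k /\ min_dist G d.

Definition dotp (n : nat) (x y : 'rV['F_2]_n) : 'F_2 := \sum_(i < n) x 0 i * y 0 i.

Definition self_orth (k n : nat) (G : 'M['F_2]_(k, n)) : Prop :=
  forall x y, in_code G x -> in_code G y -> dotp x y = 0.

Definition ceil_div (a b : nat) : nat := ((a + b - 1) %/ b)%N.
Definition griesmer (k d : nat) : nat := (\sum_(i < k) ceil_div d (2 ^ i))%N.

Definition griesmer_optimal (n k d : nat) : Prop :=
  (griesmer k d <= n < griesmer k d.+1)%N.

(* S_k repeated m times: a k x m(2^k-1) matrix; within each block, column j
   is the binary expansion of j+1 (bit i in row i), so each block lists all
   nonzero vectors of F_2^k exactly once. *)
Definition Srep (k m : nat) : 'M['F_2]_(k, m * (2 ^ k - 1)) :=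
  \matrix_(i < k, j < m * (2 ^ k - 1))
     ((odd (((j %% (2 ^ k - 1)).+1) %/ 2 ^ i))%:R : 'F_2).

(* Main.v *)
Require Import Defs.
From HB Require Import structures.
From mathcomp Require Import all_boot all_order all_algebra zify.
Set Implicit Arguments. Unset Strict Implicit. Unset Printing Implicit Defensive.
Import GRing.Theory.
Local Open Scope ring_scope.


Lemma bits_inj k x y : (x < 2 ^ k)%N -> (y < 2 ^ k)%N ->
  (forall i, (i < k)%N -> odd (x %/ 2 ^ i) = odd (y %/ 2 ^ i)) -> x = y.
Proof.
elim: k x y => [|k IH] x y.
  by rewrite expn0; case: x => //; case: y.
move=> hx hy H.
rewrite -[x]odd_double_half -[y]odd_double_half.
have h0 := H 0%N isT; rewrite !expn0 !divn1 in h0.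
rewrite h0 (IH x./2 y./2) //.
- by rewrite -divn2 ltn_divLR // -expnSr.
- by rewrite -divn2 ltn_divLR // -expnSr.
move=> i hi; have := H i.+1 hi.
by rewrite expnS !divnMA !divn2.
Qed.

Definition bitrow k (x : nat) : 'rV['F_2]_k :=
  \row_(i < k) ((odd (x %/ 2 ^ i))%:R : 'F_2).

Lemma F2_nat_inj (a b : bool) : (a%:R : 'F_2) = b%:R -> a = b.
Proof. by case: a; case: b. Qed.

Lemma bitrow_bij k : bijective (fun x : 'I_(2 ^ k) => bitrow k x).
Proof.
apply: inj_card_bij.
  move=> x y /rowP H; apply/val_inj/(bits_inj (ltn_ord x) (ltn_ord y)) => i hi.
  by have := H (Ordinal hi); rewrite !mxE => /F2_nat_inj.
by rewrite card_mx card_Fp // card_ord mul1n.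
Qed.

Lemma sum_bitrow (R : nmodType) k (F : 'rV['F_2]_k -> R) :
  (\sum_(v : 'rV['F_2]_k) F v = \sum_(x < 2 ^ k) F (bitrow k x))%R.
Proof. by rewrite (reindex _ (onW_bij _ (bitrow_bij k))). Qed.

Lemma sum_bitrow_nat k (F : 'rV['F_2]_k -> nat) :
  (\sum_(v : 'rV['F_2]_k) F v = \sum_(x < 2 ^ k) F (bitrow k x))%N.
Proof. by rewrite (reindex _ (onW_bij _ (bitrow_bij k))). Qed.

Lemma F2_addxx (x : 'F_2) : (x + x = 0)%R.
Proof. by apply: addrr_pchar2; apply: pchar_Fp. Qed.

Lemma F2_cases (x : 'F_2) : x = 0 \/ x = 1.
Proof. case: x => -[|[|i]] Hi.
- by left; apply/val_inj.
- by right; apply/val_inj.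
- by []. Qed.

Lemma F2_neq0 (x : 'F_2) : x != 0 -> x = 1.
Proof. by case: (F2_cases x) => ->; rewrite ?eqxx. Qed.

Lemma F2_add1 (x : 'F_2) : (x + 1 != 0) = (x == 0).
Proof. by case: (F2_cases x) => ->; rewrite ?add0r ?F2_addxx ?eqxx ?oner_eq0. Qed.

Lemma F2_1add (x : 'F_2) : x + (x + 1) = 1.
Proof. by rewrite addrA F2_addxx add0r. Qed.

Lemma dotpDr n (u v w : 'rV['F_2]_n) : dotp u (v + w) = dotp u v + dotp u w.
Proof. by rewrite /dotp -big_split; apply: eq_bigr => i _; rewrite mxE mulrDr. Qed.

Lemma dotpC n (u v : 'rV['F_2]_n) : dotp u v = dotp v u.
Proof. by rewrite /dotp; apply: eq_bigr => i _; rewrite mulrC. Qed.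

Lemma nz_coord n (u : 'rV['F_2]_n) : u != 0 -> exists i, u 0 i = 1.
Proof.
move=> Hu; have [/existsP [i Hi]|/existsPn H] := boolP [exists i, u 0 i != 0].
  by exists i; apply: F2_neq0.
exfalso; move/eqP: Hu; apply; apply/rowP=> i.
by rewrite mxE; apply/eqP; have := H i; rewrite negbK.
Qed.

Definition unitrow n (i : 'I_n) : 'rV['F_2]_n := \row_j ((j == i)%:R).

Lemma dotp_unit n (u : 'rV['F_2]_n) i : dotp u (unitrow i) = u 0 i.
Proof.
rewrite /dotp (bigD1 i) //= big1 ?addr0; first by rewrite mxE eqxx mulr1.
by move=> j /negbTE Hj; rewrite mxE Hj mulr0.
Qed.

Lemma wt_form k (u : 'rV['F_2]_k) : u != 0 ->
  (\sum_(v : 'rV['F_2]_k) (dotp u v != 0%R : nat))%N = (2 ^ (k - 1))%N.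
Proof.
move=> /nz_coord [i0 Hi0].
set e := unitrow i0.
have He : dotp u e = 1 by rewrite /e dotp_unit.
have E1 : (\sum_(v : 'rV['F_2]_k) (dotp u v != 0%R : nat))%N =
          (\sum_(v : 'rV['F_2]_k) (dotp u v == 0%R : nat))%N.
  rewrite (reindex_inj (addIr e)) /=.
  by apply: eq_bigr => v _; rewrite dotpDr He F2_add1.
have E2 : (\sum_(v : 'rV['F_2]_k) (dotp u v != 0%R : nat) +
          \sum_(v : 'rV['F_2]_k) (dotp u v == 0%R : nat))%N = (2 ^ k)%N.
  rewrite -big_split /=.
  rewrite (eq_bigr (fun _ => 1%N)); last by move=> v _; case: (dotp u v == 0).
  by rewrite sum1_card card_mx card_Fp // mul1n.
move: E2; rewrite -E1 addnn; case: k u i0 {Hi0 e He E1} => [|k] u [] // i0 _.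
by rewrite subSS subn0 expnS mul2n => /double_inj.
Qed.

Lemma dot_form k (u w : 'rV['F_2]_k) : (2 < k)%N ->
  \sum_(v : 'rV['F_2]_k) dotp u v * dotp w v = 0.
Proof.
move=> Hk.
set A := row_mx u^T w^T.
have : kermx A != 0.
  rewrite kermx_eq0 /row_free; apply/negP => /eqP Hr.
  have := rank_leq_col A; rewrite Hr => H.
  by move: (leq_ltn_trans H Hk); rewrite ltnn.
case/rowV0Pn => e /sub_kermxP He enz.
move: He; rewrite mul_mx_row -row_mx0 => /eq_row_mx [Hu Hw].
have Hue : dotp u e = 0.
  by move/rowP/(_ 0): Hu; rewrite !mxE dotpC => <-; apply: eq_bigr => i _; rewrite !mxE.
have Hwe : dotp w e = 0.
  by move/rowP/(_ 0): Hw; rewrite !mxE dotpC => <-; apply: eq_bigr => i _; rewrite !mxE.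
have [i1 Hi1] := nz_coord enz.
set h := fun v => dotp u v * dotp w v.
have hE : forall v, h (v + e) = h v.
  by move=> v; rewrite /h !dotpDr Hue Hwe !addr0.
have phiE : forall v : 'rV['F_2]_k, (v + e) 0 i1 = v 0 i1 + 1.
  by move=> v; rewrite mxE Hi1.
transitivity (\sum_(v : 'rV['F_2]_k) (h v * v 0 i1 + h v * (v + e) 0 i1)).
  by apply: eq_bigr => v _; rewrite -mulrDr phiE F2_1add mulr1.
rewrite big_split /=.
rewrite [X in _ + X = _](eq_bigr (fun v => h (v + e) * (v + e) 0 i1)); last first.
  by move=> v _; rewrite hE.
have R := @reindex_inj _ _ _ _ (fun v : 'rV['F_2]_k => v + e) xpredT (fun v => h v * v 0 i1) (addIr e).
rewrite /= in R; rewrite -R.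
exact: F2_addxx.
Qed.


Lemma block_sum_nat N m (F : nat -> nat) :
  (\sum_(j < m * N) F (j %% N) = m * \sum_(r < N) F r)%N.
Proof.
rewrite -(big_mkord xpredT (fun j => F (j %% N)%N)) -(big_mkord xpredT F).
elim: m => [|m IH]; first by rewrite mul0n big_geq.
rewrite mulSn (@big_cat_nat _ _ _ N 0 (N + m * N)%N xpredT _ (leq0n N) (leq_addr (m * N) N)) /=.
have E (a b : nat) (G : nat -> nat) : (\sum_(a <= i < a + b) G i = \sum_(0 <= i < b) G (i + a))%N.
  by rewrite -{1}[a]add0n big_addn addKn.
rewrite E.
rewrite [X in (_ + X)%N](eq_bigr (fun i => F (i %% N)%N)); last by move=> i _; rewrite modnDr.
rewrite IH; congr (_ + _)%N.
by rewrite big_nat_cond [RHS]big_nat_cond; apply: eq_bigr => i /andP[/andP[_ h] _]; rewrite modn_small.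
Qed.

Lemma block_sum (R : nmodType) N m (F : nat -> R) :
  (\sum_(j < m * N) F (j %% N)%N = (\sum_(r < N) F r) *+ m).
Proof.
rewrite -(big_mkord xpredT (fun j => F (j %% N)%N)) -(big_mkord xpredT F).
elim: m => [|m IH]; first by rewrite mul0n big_geq.
rewrite mulSn (@big_cat_nat _ _ _ N 0 (N + m * N)%N xpredT _ (leq0n N) (leq_addr (m * N) N)) /=.
have E (a b : nat) (G : nat -> R) : (\sum_(a <= i < a + b) G i = \sum_(0 <= i < b) G (i + a)%N).
  by rewrite -{1}[a]add0n big_addn addKn.
rewrite [X in _ + X]E.
rewrite [X in _ + X](eq_bigr (fun i => F (i %% N)%N)); last by move=> i _; rewrite modnDr.
rewrite IH mulrS; congr (_ + _).
by rewrite big_nat_cond [RHS]big_nat_cond; apply: eq_bigr => i /andP[/andP[_ h] _]; rewrite modn_small.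
Qed.

Lemma Srep_entry k m (u : 'rV['F_2]_k) j :
  (u *m Srep k m) 0 j = dotp u (bitrow k ((j %% (2 ^ k - 1)).+1)).
Proof. by rewrite !mxE /dotp; apply: eq_bigr => i _; rewrite !mxE. Qed.

Lemma bitrow0 k : bitrow k 0 = 0.
Proof. by apply/rowP => i; rewrite !mxE div0n. Qed.

Lemma sum_shift (R : nmodType) k (F : 'rV['F_2]_k -> R) :
  \sum_(x < 2 ^ k) F (bitrow k x) = F 0 + \sum_(r < 2 ^ k - 1) F (bitrow k r.+1).
Proof.
have [N eN] : exists N, (2 ^ k = N.+1)%N by exists (2 ^ k).-1; rewrite prednK // expn_gt0.
by rewrite eN subn1 /= big_ord_recl /= bitrow0.
Qed.

Lemma sum_shift_nat k (F : 'rV['F_2]_k -> nat) :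
  (\sum_(x < 2 ^ k) F (bitrow k x) = F 0%R + \sum_(r < 2 ^ k - 1) F (bitrow k r.+1))%N.
Proof.
have [N eN] : exists N, (2 ^ k = N.+1)%N by exists (2 ^ k).-1; rewrite prednK // expn_gt0.
by rewrite eN subn1 /= big_ord_recl /= bitrow0.
Qed.

Lemma wt_sum n (c : 'rV['F_2]_n) : wt c = (\sum_(j < n) (c 0%R j != 0%R : nat))%N.
Proof.
rewrite /wt -sum1_card big_mkcond /=; apply: eq_bigr => j _.
by rewrite inE; case: (c 0 j != 0).
Qed.

Lemma wt_row_mx n1 n2 (a : 'rV['F_2]_n1) (b : 'rV['F_2]_n2) :
  wt (row_mx a b) = (wt a + wt b)%N.
Proof.
rewrite !wt_sum big_split_ord /=; congr (_ + _)%N; apply: eq_bigr => j _;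
  by rewrite ?row_mxEl ?row_mxEr.
Qed.

Lemma dotp_row_mx n1 n2 (a c : 'rV['F_2]_n1) (b d : 'rV['F_2]_n2) :
  dotp (row_mx a b) (row_mx c d) = dotp a c + dotp b d.
Proof.
rewrite /dotp big_split_ord /=; congr (_ + _); apply: eq_bigr => j _;
  by rewrite ?row_mxEl ?row_mxEr.
Qed.

Lemma wt_S k m (u : 'rV['F_2]_k) : u != 0 ->
  wt (u *m Srep k m) = (2 ^ (k - 1) * m)%N.
Proof.
move=> unz; rewrite wt_sum.
rewrite (eq_bigr (fun j : 'I_(m * (2 ^ k - 1)) =>
   (fun r => (dotp u (bitrow k r.+1) != 0%R : nat)) (j %% (2 ^ k - 1))%N)); last first.
  by move=> j _; rewrite Srep_entry.
rewrite (block_sum_nat (2 ^ k - 1) m (fun r => (dotp u (bitrow k r.+1) != 0%R : nat))).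
have := sum_shift_nat (fun v => (dotp u v != 0%R : nat)).
rewrite -(sum_bitrow_nat (fun v => (dotp u v != 0%R : nat))) wt_form // /dotp big1 ?eqxx ?add0n; last by move=> i _; rewrite mxE mulr0.
by move=> <-; rewrite mulnC.
Qed.

Lemma dot_S k m (u w : 'rV['F_2]_k) : (2 < k)%N ->
  dotp (u *m Srep k m) (w *m Srep k m) = 0.
Proof.
move=> Hk; rewrite /dotp.
rewrite (eq_bigr (fun j : 'I_(m * (2 ^ k - 1)) =>
   (fun r => dotp u (bitrow k r.+1) * dotp w (bitrow k r.+1)) (j %% (2 ^ k - 1))%N)); last first.
  by move=> j _; rewrite !Srep_entry.
rewrite (block_sum (2 ^ k - 1) m (fun r => dotp u (bitrow k r.+1) * dotp w (bitrow k r.+1))).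
have := sum_shift (fun v => dotp u v * dotp w v).
rewrite -(sum_bitrow (fun v => dotp u v * dotp w v)) dot_form // {1}/dotp big1 ?mul0r ?add0r; last by move=> i _; rewrite mxE mulr0.
by move=> <-; rewrite mul0rn.
Qed.

Lemma geom k : (\sum_(i < k) 2 ^ (k - 1 - i) = 2 ^ k - 1)%N.
Proof.
elim: k => [|k IH]; first by rewrite big_ord0.
rewrite big_ord_recl /=.
rewrite (eq_bigr (fun i : 'I_k => 2 ^ (k - 1 - i))%N); last first.
  by move=> i _; congr (2 ^ _)%N; rewrite /bump /=; lia.
rewrite IH expnS; have := expn_gt0 2 k; rewrite subn0 subSS subn0; lia.
Qed.

Lemma griesmer_shift k m d : (0 < k)%N ->
  griesmer k (2 ^ (k - 1) * m + d) = (m * (2 ^ k - 1) + griesmer k d)%N.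
Proof.
move=> Hk; rewrite /griesmer /ceil_div.
rewrite (eq_bigr (fun i : 'I_k => 2 ^ (k - 1 - i) * m + (d + 2 ^ i - 1) %/ 2 ^ i)%N).
  by rewrite big_split /= -big_distrl /= geom mulnC.
move=> i _.
have e : (2 ^ (k - 1) = 2 ^ (k - 1 - i) * 2 ^ i)%N.
  by rewrite -expnD subnK //; have := ltn_ord i; lia.
have b0 : (0 < 2 ^ i)%N by rewrite expn_gt0.
rewrite e -!addnA -addnBA; last by rewrite addn_gt0 b0 orbT.
by rewrite mulnAC divnMDl.
Qed.


Lemma codeE k n (H : 'M['F_2]_(k, n)) c : in_code H c <-> exists u, c = u *m H.
Proof. by split => [/submxP|/submxP]. Qed.

Lemma main_aux (k n d m : nat) (G : 'M['F_2]_(k, n)) :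
  (3 <= k)%N -> is_code G d ->
  ((self_orth G /\ griesmer_optimal n k d) <->
   (self_orth (row_mx (Srep k m) G) /\
    is_code (row_mx (Srep k m) G) (2 ^ (k - 1) * m + d)%N /\
    griesmer_optimal (m * (2 ^ k - 1) + n)%N k (2 ^ (k - 1) * m + d)%N))
  /\
  ((self_orth G /\ n = griesmer k d) <->
   (self_orth (row_mx (Srep k m) G) /\
    is_code (row_mx (Srep k m) G) (2 ^ (k - 1) * m + d) /\
    (m * (2 ^ k - 1) + n)%N = griesmer k (2 ^ (k - 1) * m + d)%N)).
Proof.
move=> Hk [HrG [[c0 [Hc0 c0nz wc0]] Hmin]].
set S := Srep k m; set G' := row_mx S G.
have mulG' u : u *m G' = row_mx (u *m S) (u *m G) by rewrite mul_mx_row.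
have dotG' u w : dotp (u *m G') (w *m G') = dotp (u *m G) (w *m G).
  by rewrite !mulG' dotp_row_mx dot_S // add0r.
have freeG : row_free G by rewrite /row_free HrG.
have rankG' : \rank G' = k.
  apply/eqP; rewrite eqn_leq rank_leq_row /=.
  have HG : G = G' *m col_mx 0%R 1%:M%R by rewrite mul_row_col mulmx0 mulmx1 add0r.
  by apply: leq_trans (mxrankM_maxl G' (col_mx 0%R 1%:M%R)); rewrite -HG HrG.
have freeG' : row_free G' by rewrite /row_free rankG'.
have nzG u : u != 0%R -> u *m G != 0.
  move=> unz; apply/eqP => h; move/eqP: unz; apply; apply: (row_free_inj freeG).
  by rewrite h mul0mx.
have nzG' u : u != 0%R -> u *m G' != 0.
  move=> unz; apply/eqP => h; move/eqP: unz; apply; apply: (row_free_inj freeG').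
  by rewrite h mul0mx.
have wtG' u : u != 0%R -> wt (u *m G') = (2 ^ (k - 1) * m + wt (u *m G))%N.
  by move=> unz; rewrite mulG' wt_row_mx wt_S.
have isc : is_code G' (2 ^ (k - 1) * m + d).
  split => //; split.
    case/codeE: Hc0 => u0 Hu0.
    have u0nz : u0 != 0%R by apply: contraNneq c0nz => h; rewrite Hu0 h mul0mx.
    exists (u0 *m G'); split; first by apply/codeE; exists u0.
      exact: nzG'.
    by rewrite wtG' // -Hu0 wc0.
  move=> c /codeE [u ->] cnz.
  have unz : u != 0%R by apply: contraNneq cnz => h; rewrite h mul0mx.
  rewrite wtG' // leq_add2l; apply: Hmin; last exact: nzG.
  by apply/codeE; exists u.
have SO : self_orth G <-> self_orth G'.
  split => H x y /codeE [u ->] /codeE [w ->].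
    by rewrite dotG'; apply: H; apply/codeE; [exists u | exists w].
  by rewrite -dotG'; apply: H; apply/codeE; [exists u | exists w].
have gr d' : griesmer k (2 ^ (k - 1) * m + d') = (m * (2 ^ k - 1) + griesmer k d')%N.
  by apply: griesmer_shift; apply: leq_trans Hk.
rewrite /griesmer_optimal -(addnS (2 ^ (k - 1) * m) d) !gr leq_add2l ltn_add2l.
split; split.
- by case=> so g; split; [apply/SO | split].
- by case=> so [_ g]; split; [apply/SO |].
- by case=> so e; split; [apply/SO | split; [done | rewrite e]].
- by case=> so [_ /addnI g]; split; [apply/SO |].
Qed.

Local Close Scope ring_scope.
Theorem theorem3p4 (k n d m : nat) (G : 'M['F_2]_(k, n)) :
  (3 <= k)%N -> is_code G d ->
  ((self_orth G /\ griesmer_optimal n k d) <->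
   (self_orth (row_mx (Srep k m) G) /\
    is_code (row_mx (Srep k m) G) (2 ^ (k - 1) * m + d) /\
    griesmer_optimal (m * (2 ^ k - 1) + n) k (2 ^ (k - 1) * m + d)))
  /\
  ((self_orth G /\ n = griesmer k d) <->
   (self_orth (row_mx (Srep k m) G) /\
    is_code (row_mx (Srep k m) G) (2 ^ (k - 1) * m + d) /\
    m * (2 ^ k - 1) + n = griesmer k (2 ^ (k - 1) * m + d))).
Proof. exact: main_aux. Qed.
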